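(* Let $B$ be a Lie algebra over a field $k$ satisfying the axioms $\Phi1$: $\forall x_1,x_2,x_3,x_4\ (x_1x_2)(x_3x_4)=0$ and $\Phi2$: $\forall x\forall y\ (xyx=0\wedge xyy=0\to xy=0)$. Then $B$ is metabelian, and $\mathrm{Fit}(B)$ as well as every nilpotent subalgebra of $B$ is abelian.
   Context: Products are left-normed: $xyx=(xy)x$. $\mathrm{Fit}(B)$, the Fitting radical of $B$, is the sum of all nilpotent ideals of $B$. *)

(* Defs.v *)
(* Lie algebras over a field k, possibly infinite-dimensional:
   a k-vector space V (lmodType k) with a bracket br; products are left-normed,
   e.g. xyx = br (br x y) x. *)
From HB Require Import structures.
From mathcomp Require Import all_boot all_algebra.
Set Implicit Arguments. Unset Strict Implicit. Unset Printing Implicit Defensive.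
Import GRing.Theory.
Local Open Scope ring_scope.

Section Lie.
Variables (k : fieldType) (V : lmodType k) (br : V -> V -> V).

Definition is_lie : Prop :=
  [/\ (forall (a : k) x y z, br (a *: x + y) z = a *: br x z + br y z),
      (forall (a : k) x y z, br z (a *: x + y) = a *: br z x + br z y),
      (forall x, br x x = 0) &
      (forall x y z, br (br x y) z + br (br y z) x + br (br z x) y = 0)].

Inductive span (A : V -> Prop) : V -> Prop :=
  | span0 : span A 0
  | span_in x : A x -> span A x
  | span_add x y : span A x -> span A y -> span A (x + y)
  | span_scale (a : k) x : span A x -> span A (a *: x).

Definition subspace (S : V -> Prop) : Prop :=
  [/\ S 0, (forall x y, S x -> S y -> S (x + y)) &
      (forall (a : k) x, S x -> S (a *: x))].

Definition subalgebra (S : V -> Prop) : Prop :=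
  subspace S /\ (forall x y, S x -> S y -> S (br x y)).

Definition ideal (S : V -> Prop) : Prop :=
  subspace S /\ (forall x y, S x -> S (br x y)).

Definition brset (A C : V -> Prop) : V -> Prop :=
  span (fun z => exists x y, [/\ A x, C y & z = br x y]).

Fixpoint lcs (S : V -> Prop) (n : nat) : V -> Prop :=
  if n is n'.+1 then brset (lcs S n') S else S.

Definition nilpotent (S : V -> Prop) : Prop :=
  exists n, forall x, lcs S n x -> x = 0.

Definition abelian (S : V -> Prop) : Prop :=
  forall x y, S x -> S y -> br x y = 0.

Definition whole : V -> Prop := fun _ => True.

Definition derived : V -> Prop := brset whole whole.
Definition metabelian : Prop := abelian derived.

Definition Fit : V -> Prop :=
  span (fun x => exists I, [/\ ideal I, nilpotent I & I x]).

Definition Phi1 : Prop := forall x1 x2 x3 x4, br (br x1 x2) (br x3 x4) = 0.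
Definition Phi2 : Prop :=
  forall x y, br (br x y) x = 0 -> br (br x y) y = 0 -> br x y = 0.

End Lie.

(* Main.v *)
Require Import Defs.
From mathcomp Require Import all_boot all_algebra.
From mathcomp Require Import zify.
Set Implicit Arguments. Unset Strict Implicit. Unset Printing Implicit Defensive.
Import GRing.Theory.
Local Open Scope ring_scope.

Lemma brl0 (k : fieldType) (V : lmodType k) (br : V -> V -> V) :
  is_lie br -> forall z, br 0 z = 0.
Proof.
case=> Hl _ _ _ z; have := Hl 1 0 0 z; rewrite !(scale1r, addr0).
move=> /(congr1 (fun t => t - br 0 z)); rewrite subrr addrK => h; by rewrite -h.
Qed.

Lemma brr0 (k : fieldType) (V : lmodType k) (br : V -> V -> V) :
  is_lie br -> forall z, br z 0 = 0.
Proof.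
case=> _ Hr _ _ z; have := Hr 1 0 0 z; rewrite !(scale1r, addr0).
move=> /(congr1 (fun t => t - br z 0)); rewrite subrr addrK => h; by rewrite -h.
Qed.

Lemma brlD (k : fieldType) (V : lmodType k) (br : V -> V -> V) :
  is_lie br -> forall x y z, br (x + y) z = br x z + br y z.
Proof. move=> L x y z; case: (L) => Hl _ _ _; by have := Hl 1 x y z; rewrite !scale1r. Qed.

Lemma brrD (k : fieldType) (V : lmodType k) (br : V -> V -> V) :
  is_lie br -> forall x y z, br z (x + y) = br z x + br z y.
Proof. move=> L x y z; case: (L) => _ Hr _ _; by have := Hr 1 x y z; rewrite !scale1r. Qed.

Lemma brlZ (k : fieldType) (V : lmodType k) (br : V -> V -> V) :
  is_lie br -> forall a x z, br (a *: x) z = a *: br x z.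
Proof. move=> L a x z; case: (L) => Hl _ _ _; by have := Hl a x 0 z; rewrite addr0 (brl0 L) addr0. Qed.

Lemma brrZ (k : fieldType) (V : lmodType k) (br : V -> V -> V) :
  is_lie br -> forall a x z, br z (a *: x) = a *: br z x.
Proof. move=> L a x z; case: (L) => _ Hr _ _; by have := Hr a x 0 z; rewrite addr0 (brr0 L) addr0. Qed.

Lemma anti (k : fieldType) (V : lmodType k) (br : V -> V -> V) :
  is_lie br -> forall x y, br x y = - br y x.
Proof.
move=> L x y; case: (L) => _ _ Ha _.
have := Ha (x + y); rewrite (brlD L) !(brrD L) !Ha add0r addr0 => /eqP.
by rewrite addr_eq0 => /eqP.
Qed.

Lemma span_mono (k : fieldType) (V : lmodType k) (A B : V -> Prop) :
  (forall z, A z -> B z) -> forall x, Defs.span A x -> Defs.span B x.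
Proof.
move=> AB x; elim=> [|y /AB|y z _ Hy _ Hz|a y _ Hy].
- exact: Defs.span0.
- exact: Defs.span_in.
- exact: Defs.span_add.
- exact: Defs.span_scale.
Qed.

Lemma spanL (k : fieldType) (V : lmodType k) (br : V -> V -> V) (A : V -> Prop) y :
  is_lie br -> (forall a, A a -> br a y = 0) -> forall u, Defs.span A u -> br u y = 0.
Proof.
move=> L H u; elim=> [|z /H|z w _ Hz _ Hw|a z _ Hz] //.
- exact: brl0.
- by rewrite (brlD L) Hz Hw addr0.
- by rewrite (brlZ L) Hz scaler0.
Qed.

Lemma spanR (k : fieldType) (V : lmodType k) (br : V -> V -> V) (A : V -> Prop) y :
  is_lie br -> (forall a, A a -> br y a = 0) -> forall u, Defs.span A u -> br y u = 0.
Proof.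
move=> L H u; elim=> [|z /H|z w _ Hz _ Hw|a z _ Hz] //.
- exact: brr0.
- by rewrite (brrD L) Hz Hw addr0.
- by rewrite (brrZ L) Hz scaler0.
Qed.

Lemma der_gen (k : fieldType) (V : lmodType k) (br : V -> V -> V) :
  is_lie br -> Phi1 br -> forall a b u, derived br u -> br (br a b) u = 0.
Proof.
move=> L P a b u; apply: spanR => // z [x [y [_ _ ->]]]; exact: P.
Qed.

Lemma lcs_der (k : fieldType) (V : lmodType k) (br : V -> V -> V) S m u :
  lcs br S m.+1 u -> derived br u.
Proof.
apply: span_mono => z [x [y [_ _ ->]]]; by exists x, y.
Qed.

Lemma nil_ab (k : fieldType) (V : lmodType k) (br : V -> V -> V) :
  is_lie br -> Phi1 br -> Phi2 br ->
  forall S : V -> Prop, subalgebra br S -> nilpotent br S -> abelian br S.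
Proof.
move=> L P1 P2 S _ [n Hn].
have key : forall d m, (m + d = n)%N -> forall u x, lcs br S m u -> (0 < m)%N ->
    S x -> br u x = 0.
  elim=> [|d IH] m Emd u x Hu Hm Hx.
    rewrite addn0 in Emd; subst m; by rewrite (Hn _ Hu) brl0.
  have E : (m.+1 + d = n)%N by lia.
  have H1 : lcs br S m.+1 (br u x) by apply: Defs.span_in; exists u, x.
  apply: P2.
  - case: m Hm Hu {Emd E H1 IH} => // m _ Hu.
    apply: der_gen => //; exact: lcs_der Hu.
  - exact: (IH m.+1 E).
move=> x y Hx Hy.
case: n Hn key => [|n] Hn key.
  by rewrite (Hn x Hx) brl0.
have H1 : lcs br S 1 (br x y) by apply: Defs.span_in; exists x, y.
apply: P2; apply: (key n 1%N) => //; lia.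
Qed.

Theorem lemma3p1 (k : fieldType) (V : lmodType k) (br : V -> V -> V) :
  is_lie br -> Phi1 br -> Phi2 br ->
  [/\ metabelian br, abelian br (Fit br) &
      forall S : V -> Prop, subalgebra br S -> nilpotent br S -> abelian br S].
Proof.
move=> L P1 P2; split.
- move=> x y Hx Hy; apply: spanL Hx => // z [a [b [_ _ ->]]].
  exact: der_gen.
- move=> x y Hx Hy; apply: spanL Hx => // a [I [HI NI Ia]].
  apply: spanR Hy => // b [J [HJ NJ Jb]].
  have sub : forall K, ideal br K -> subalgebra br K.
    by move=> K [sK cK]; split => // u v Ku _; exact: cK.
  have AI := nil_ab L P1 P2 (sub _ HI) NI.
  have AJ := nil_ab L P1 P2 (sub _ HJ) NJ.
  have abI : I (br a b) by case: HI => _ h; exact: h.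
  have abJ : J (br a b).
    rewrite (anti L) -scaleN1r; case: HJ => [[_ _ hs] h]; apply: hs; exact: h.
  by apply: P2; [apply: AI | apply: AJ].
- exact: nil_ab.
Qed.
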